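(* Let each $f_i:\mathbb{R}^d\to\mathbb{R}$, $i\in[n]$, be differentiable with $L$-Lipschitz gradient. Consider the iteration $X^{(s+1)} = (X^{(s)} - \eta_s\,\partial f(X^{(s)}))W^{(s)}$ for $s = t,\dots,t+H-1$, where $W^{(t)}$ is a minimizer of $\min_{W\in\mathcal{M}_w}\|\partial f(\overline{X}^{(t)})W - \overline{\partial f}(\overline{X}^{(t)})\|_F^2$ and $W^{(t+i)} = W^{(t)}$ for $0\le i\le H-1$. Then $$\big\|\partial f(\overline{X}^{(t+H)})W^{(t)} - \overline{\partial f}(\overline{X}^{(t+H)})\big\|_F^2 \leq 2\big\|\partial f(\overline{X}^{(t)})W^{(t)} - \overline{\partial f}(\overline{X}^{(t)})\big\|_F^2 + 2H\sum_{i=0}^{H-1}\eta_{t+i}^2L^2\|\partial f(X^{(t+i)})\|_F^2.$$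
   Context: $X^{(s)} = [\mathbf{x}_1^{(s)},\dots,\mathbf{x}_n^{(s)}]\in\mathbb{R}^{d\times n}$; $\partial f(X) = [\nabla f_1(\mathbf{x}_1),\dots,\nabla f_n(\mathbf{x}_n)]$; for $Y\in\mathbb{R}^{d\times n}$, $\overline{Y} = Y\frac{\mathbf{1}\mathbf{1}^\top}{n}$ and $\overline{\partial f}(X) = \partial f(X)\frac{\mathbf{1}\mathbf{1}^\top}{n}$. Given a graph $G=(V,E)$ on $n$ nodes, $\mathcal{M}_w = \{W\in\mathbb{R}^{n\times n}: W\mathbf{1} = \mathbf{1},\ \mathbf{1}^\top W = \mathbf{1}^\top,\ 0\le w_{ij}\le 1\ \forall i,j,\ w_{ij}=0\ \forall (i,j)\notin E\}$. *)

(* Defs.v *)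
From HB Require Import structures.
From mathcomp Require Import all_boot all_order all_algebra.
From mathcomp Require Import all_classical all_reals all_analysis.
Set Implicit Arguments. Unset Strict Implicit. Unset Printing Implicit Defensive.
Import Order.TTheory GRing.Theory Num.Theory.
Import numFieldNormedType.Exports.
Local Open Scope ring_scope.

Section Defs.
Variable R : realType.

Definition norm2 (d : nat) (v : 'cV[R]_d) : R := Num.sqrt (\sum_(k < d) v k 0 ^+ 2).

Definition fnorm (d n : nat) (A : 'M[R]_(d, n)) : R :=
  Num.sqrt (\sum_(k < d) \sum_(i < n) A k i ^+ 2).

Definition mbar (d n : nat) (Y : 'M[R]_(d, n)) : 'M[R]_(d, n) :=
  Y *m (n%:R^-1 *: (const_mx 1 : 'M[R]_(n, n))).

Definition pf (d n : nat) (grad : 'I_n -> 'cV[R]_d -> 'cV[R]_d) (X : 'M[R]_(d, n))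
  : 'M[R]_(d, n) := \matrix_(k < d, i < n) grad i (col i X) k 0.

Definition pfbar (d n : nat) (grad : 'I_n -> 'cV[R]_d -> 'cV[R]_d) (X : 'M[R]_(d, n))
  : 'M[R]_(d, n) := mbar (pf grad X).

Definition Mw (n : nat) (E : rel 'I_n) (W : 'M[R]_n) : Prop :=
  [/\ W *m (const_mx 1 : 'cV[R]_n) = const_mx 1,
      (const_mx 1 : 'rV[R]_n) *m W = const_mx 1,
      (forall i j, 0 <= W i j <= 1) &
      (forall i j, ~~ E i j -> W i j = 0)].

Definition is_gradient (d : nat) (f : 'cV[R]_d -> R^o) (grad : 'cV[R]_d -> 'cV[R]_d) : Prop :=
  forall x, differentiable f x /\
    forall h : 'cV[R]_d, 'd f x h = \sum_(k < d) grad x k 0 * h k 0.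

Definition lipschitz_grad (d : nat) (L : R) (g : 'cV[R]_d -> 'cV[R]_d) : Prop :=
  forall x y, norm2 (g x - g y) <= L * norm2 (x - y).

End Defs.

(* Main.v *)
Require Import Defs.
From HB Require Import structures.
From mathcomp Require Import all_boot all_order all_algebra.
From mathcomp Require Import all_classical all_reals all_analysis.
From mathcomp Require Import ring lra.
Import Order.TTheory GRing.Theory Num.Theory.
Import numFieldNormedType.Exports.
Local Open Scope ring_scope.

Section Aux.
Variable R : realType.

Lemma jensen_sq (I : finType) (w u : I -> R) : (forall i, 0 <= w i) ->
  \sum_i w i = 1 -> (\sum_i w i * u i) ^+ 2 <= \sum_i w i * u i ^+ 2.
Proof.
move=> w0 w1; set m := \sum_i w i * u i.
have h : 0 <= \sum_i w i * (u i - m) ^+ 2.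
  by apply: sumr_ge0 => i _; rewrite mulr_ge0 ?sqr_ge0.
rewrite (eq_bigr (fun i => w i * u i ^+ 2 - (m *+ 2) * (w i * u i) + m ^+ 2 * w i)) in h;
  last by move=> i _; ring.
rewrite big_split /= sumrB -!mulr_sumr w1 -/m in h.
nra.
Qed.

Lemma mean_sq (m : nat) (a : 'I_m -> R) :
  (m%:R^-1 * \sum_i a i) ^+ 2 <= m%:R^-1 * \sum_i a i ^+ 2.
Proof.
case: m a => [|m] a; first by rewrite !big_ord0 !mulr0 expr0n.
rewrite !mulr_sumr. apply: (@jensen_sq _ (fun _ => m.+1%:R^-1) a).
  by move=> _; rewrite invr_ge0 ler0n.
by rewrite sumr_const card_ord -(mulr_natr (m.+1%:R^-1)) mulVf // pnatr_eq0.
Qed.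

Lemma sum_sq (m : nat) (a : 'I_m -> R) :
  (\sum_i a i) ^+ 2 <= m%:R * \sum_i a i ^+ 2.
Proof.
case: m a => [|m] a; first by rewrite !big_ord0 mul0r expr0n.
have h := mean_sq _ a.
have nz : m.+1%:R != 0 :> R by rewrite pnatr_eq0.
have -> : (\sum_i a i) ^+ 2 = m.+1%:R ^+ 2 * (m.+1%:R^-1 * \sum_i a i) ^+ 2.
  by rewrite -exprMn mulrA mulfV ?mul1r.
have -> : m.+1%:R * \sum_i a i ^+ 2 = m.+1%:R ^+ 2 * (m.+1%:R^-1 * \sum_i a i ^+ 2).
  by rewrite mulrA expr2 -(mulrA m.+1%:R) mulfV ?mulr1.
by rewrite ler_wpM2l // sqr_ge0.
Qed.

Definition sqF d n (A : 'M[R]_(d, n)) := \sum_k \sum_i A k i ^+ 2.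
Arguments sqF {d n} A.

Lemma fnorm_sq d n (A : 'M[R]_(d, n)) : fnorm A ^+ 2 = sqF A.
Proof.
rewrite /fnorm sqr_sqrtr //; apply: sumr_ge0 => k _; apply: sumr_ge0 => i _.
exact: sqr_ge0.
Qed.

Lemma sqF_ge0 d n (A : 'M[R]_(d, n)) : 0 <= sqF A.
Proof. by apply: sumr_ge0 => k _; apply: sumr_ge0 => i _; exact: sqr_ge0. Qed.

Lemma sqF_add d n (A B : 'M[R]_(d, n)) : sqF (A + B) <= 2 * sqF A + 2 * sqF B.
Proof.
rewrite /sqF !mulr_sumr -big_split /=; apply: ler_sum => k _.
rewrite !mulr_sumr -big_split /=; apply: ler_sum => i _.
rewrite mxE; have := sqr_ge0 (A k i - B k i); nra.
Qed.

Lemma contract (n : nat) (W : 'M[R]_n) (v : 'I_n -> R) :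
  (forall i, \sum_j W i j = 1) -> (forall j, \sum_i W i j = 1) ->
  (forall i j, 0 <= W i j) ->
  \sum_j (\sum_i v i * (W i j - n%:R^-1)) ^+ 2 <= \sum_i v i ^+ 2.
Proof.
case: n W v => [|n] W v rs cs W0; first by rewrite !big_ord0.
set c := n.+1%:R^-1 * \sum_i v i.
have e : forall j, \sum_i v i * (W i j - n.+1%:R^-1) = \sum_i W i j * (v i - c).
  move=> j.
  rewrite [LHS](eq_bigr (fun i => W i j * v i - n.+1%:R^-1 * v i)); last by move=> i _; ring.
  rewrite [RHS](eq_bigr (fun i => W i j * v i - c * W i j)); last by move=> i _; ring.
  by rewrite !sumrB -!mulr_sumr cs mulr1.
rewrite (eq_bigr (fun j => (\sum_i W i j * (v i - c)) ^+ 2)); last by move=> j _; rewrite e.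
apply: (le_trans (y := \sum_j \sum_i W i j * (v i - c) ^+ 2)).
  apply: ler_sum => j _.
  exact: (@jensen_sq _ (fun i => W i j) (fun i => v i - c) (fun i => W0 i j) (cs j)).
rewrite exchange_big /=.
rewrite (eq_bigr (fun i => (v i - c) ^+ 2)); last first.
  by move=> i _; rewrite -mulr_suml rs mul1r.
have hs : \sum_i v i = n.+1%:R * c by rewrite /c mulrA mulfV ?mul1r // pnatr_eq0.
rewrite (eq_bigr (fun i => v i ^+ 2 - (c *+ 2) * v i + c ^+ 2)); last by move=> i _; ring.
rewrite big_split /= sumrB -mulr_sumr hs sumr_const card_ord -(mulr_natr (c ^+ 2)).
have hn : 0 <= n.+1%:R :> R by rewrite ler0n.
have := mulr_ge0 hn (sqr_ge0 c).
nra.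
Qed.

Lemma contract_mx d n (W : 'M[R]_n) (M : 'M[R]_(d, n)) :
  (forall i, \sum_j W i j = 1) -> (forall j, \sum_i W i j = 1) ->
  (forall i j, 0 <= W i j) ->
  sqF (M *m (W - n%:R^-1 *: const_mx 1)) <= sqF M.
Proof.
move=> rs cs W0; rewrite /sqF; apply: ler_sum => k _.
have -> : \sum_j (M *m (W - n%:R^-1 *: const_mx 1)) k j ^+ 2
        = \sum_j (\sum_i M k i * (W i j - n%:R^-1)) ^+ 2.
  apply: eq_bigr => j _; rewrite mxE; congr (_ ^+ 2); apply: eq_bigr => i _.
  by rewrite !mxE mulr1.
exact: (@contract n W (fun i => M k i) rs cs W0).
Qed.

End Aux.
Arguments sqF {R d n} A.

Theorem proposition1 (R : realType) (d n : nat) (E : rel 'I_n)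
  (f : 'I_n -> 'cV[R]_d -> R^o) (grad : 'I_n -> 'cV[R]_d -> 'cV[R]_d) (L : R)
  (X : nat -> 'M[R]_(d, n)) (eta : nat -> R) (t H : nat) (Wt : 'M[R]_n) :
  (forall i, is_gradient (f i) (grad i)) ->
  (forall i, lipschitz_grad L (grad i)) ->
  Mw E Wt ->
  (forall W, Mw E W ->
     fnorm (pf grad (mbar (X t)) *m Wt - pfbar grad (mbar (X t))) ^+ 2
     <= fnorm (pf grad (mbar (X t)) *m W - pfbar grad (mbar (X t))) ^+ 2) ->
  (forall s, (t <= s < t + H)%N ->
     X s.+1 = (X s - eta s *: pf grad (X s)) *m Wt) ->
  fnorm (pf grad (mbar (X (t + H)%N)) *m Wt - pfbar grad (mbar (X (t + H)%N))) ^+ 2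
  <= 2 * fnorm (pf grad (mbar (X t)) *m Wt - pfbar grad (mbar (X t))) ^+ 2
     + 2 * H%:R * \sum_(i < H) eta (t + i)%N ^+ 2 * L ^+ 2 * fnorm (pf grad (X (t + i)%N)) ^+ 2.
Proof.
move=> _ Hlip [HW1 HW2 HW01 _] _ HX.
have rs : forall i, \sum_j Wt i j = 1.
  move=> i; have := congr1 (fun M : 'M[R]_(n,1) => M i 0) HW1; rewrite mxE [RHS]mxE => <-.
  by apply: eq_bigr => j _; rewrite mxE mulr1.
have cs : forall j, \sum_i Wt i j = 1.
  move=> j; have := congr1 (fun M : 'M[R]_(1,n) => M 0 j) HW2; rewrite mxE [RHS]mxE => <-.
  by apply: eq_bigr => i _; rewrite mxE mul1r.
have W0 : forall i j, 0 <= Wt i j by move=> i j; case/andP: (HW01 i j).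
pose c : R := n%:R^-1.
have pfbarE : forall M, pf grad M *m Wt - pfbar grad M
    = pf grad M *m (Wt - c *: const_mx 1) by move=> M; rewrite /pfbar /mbar mulmxBr.
rewrite !pfbarE.
set B := Wt - _.
set P1 := pf grad (mbar (X (t + H)%N)).
set P0 := pf grad (mbar (X t)).
have hD : sqF (P1 - P0) <= H%:R * \sum_(i < H) eta (t + i)%N ^+ 2 * L ^+ 2
                                   * fnorm (pf grad (X (t + i)%N)) ^+ 2.
  have [n0|npos] := posnP n.
    rewrite /sqF big1; last first.
      by move=> k _; rewrite big1 // => -[j hj] _; exfalso; move: hj; rewrite n0.
    apply: mulr_ge0; first exact: ler0n.
    apply: sumr_ge0 => i _; apply: mulr_ge0; last exact: sqr_ge0.
    by apply: mulr_ge0; exact: sqr_ge0.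
  have nz : n%:R != 0 :> R by rewrite pnatr_eq0 -lt0n.
  have mbarE : forall (Y : 'M[R]_(d, n)) k j, mbar Y k j = c * \sum_l Y k l.
    move=> Y k j; rewrite /mbar mxE mulr_sumr; apply: eq_bigr => l _.
    by rewrite !mxE mulr1 mulrC.
  have subE : forall (A A' : 'M[R]_(d, n)) k j, (A - A') k j = A k j - A' k j.
    by move=> A A' k j; rewrite !mxE.
  have subE' : forall (A A' : 'cV[R]_d) k, (A - A') k 0 = A k 0 - A' k 0.
    by move=> A A' k; rewrite !mxE.
  have colE : forall (A : 'M[R]_(d, n)) k j, col j A k 0 = A k j.
    by move=> A k j; rewrite mxE.
  have pfE : forall (A : 'M[R]_(d, n)) k j, pf grad A k j = grad j (col j A) k 0.
    by move=> A k j; rewrite mxE.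
  have step : forall (Z : 'M[R]_(d, n)) k, c * \sum_l (Z *m Wt) k l = c * \sum_l Z k l.
    move=> Z k; congr (_ * _).
    rewrite (eq_bigr (fun l => \sum_i Z k i * Wt i l)); last by move=> l _; rewrite mxE.
    rewrite exchange_big /=; apply: eq_bigr => i _.
    by rewrite -mulr_sumr rs mulr1.
  have rec : forall h, (h <= H)%N -> forall k, c * \sum_l X (t + h)%N k l
      = c * \sum_l X t k l
        - \sum_(i < h) eta (t + i)%N * (c * \sum_l pf grad (X (t + i)%N) k l).
    elim=> [|h IH] hH k; first by rewrite addn0 big_ord0 subr0.
    rewrite big_ord_recr /= opprD addrA -IH ?(ltnW hH) // addnS HX; last first.
      by apply/andP; split; [exact: leq_addr | rewrite ltn_add2l].
    rewrite step (eq_bigr (fun l => X (t + h)%N k l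
                 - eta (t + h)%N * pf grad (X (t + h)%N) k l)); last first.
      by move=> l _; rewrite !mxE.
    rewrite sumrB -mulr_sumr; ring.
  pose g (i : 'I_H) k := c * \sum_l pf grad (X (t + i)%N) k l.
  have diff : forall k j, mbar (X (t + H)%N) k j - mbar (X t) k j
      = - \sum_(i < H) eta (t + i)%N * g i k.
    by move=> k j; rewrite !mbarE (rec H (leqnn H)) addrAC subrr add0r.
  pose Q := \sum_k \sum_(i < H) eta (t + i)%N ^+ 2 * (c * \sum_l pf grad (X (t + i)%N) k l ^+ 2).
  rewrite /sqF exchange_big /=.
  apply: (le_trans (y := \sum_(j < n) L ^+ 2 * (H%:R * Q))).
    apply: ler_sum => j _.
    have e1 : \sum_k (P1 - P0) k j ^+ 2 = norm2 (grad j (col j (mbar (X (t + H)%N)))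
                                   - grad j (col j (mbar (X t)))) ^+ 2.
      rewrite /norm2 sqr_sqrtr; last by apply: sumr_ge0 => k _; exact: sqr_ge0.
      by apply: eq_bigr => k _; rewrite subE' subE !pfE.
    have e2 : norm2 (col j (mbar (X (t + H)%N)) - col j (mbar (X t))) ^+ 2
              = \sum_k (\sum_(i < H) eta (t + i)%N * g i k) ^+ 2.
      rewrite /norm2 sqr_sqrtr; last by apply: sumr_ge0 => k _; exact: sqr_ge0.
      by apply: eq_bigr => k _; rewrite subE' !colE diff sqrrN.
    rewrite e1.
    apply: (le_trans (y := (L * norm2 (col j (mbar (X (t + H)%N)) - col j (mbar (X t)))) ^+ 2)).
      have h1 := Hlip j (col j (mbar (X (t + H)%N))) (col j (mbar (X t))).
      have h0 : 0 <= norm2 (grad j (col j (mbar (X (t + H)%N)))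
                                   - grad j (col j (mbar (X t)))) by exact: sqrtr_ge0.
      nra.
    rewrite exprMn e2 ler_wpM2l ?sqr_ge0 // /Q mulr_sumr; apply: ler_sum => k _.
    apply: le_trans; first exact: sum_sq.
    rewrite ler_wpM2l ?ler0n //; apply: ler_sum => i _.
    rewrite exprMn ler_wpM2l ?sqr_ge0 //; exact: mean_sq.
  rewrite sumr_const card_ord -(mulr_natr (L ^+ 2 * (H%:R * Q))).
  have EQ : L ^+ 2 * (H%:R * Q) * n%:R = H%:R * \sum_(i < H) eta (t + i)%N ^+ 2 * L ^+ 2
                                   * fnorm (pf grad (X (t + i)%N)) ^+ 2.
    under eq_bigr do rewrite fnorm_sq.
    rewrite /Q exchange_big /= mulrC !mulr_sumr; apply: eq_bigr => i _.
    rewrite -mulr_sumr -mulr_sumr /sqF /c; field; exact: nz.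

  by rewrite EQ lexx.
have -> : P1 *m B = P0 *m B + (P1 - P0) *m B by rewrite mulmxBl addrC subrK.
rewrite !fnorm_sq.
apply: le_trans; first exact: sqF_add.
rewrite -mulrA lerD2l ler_wpM2l //.
apply: le_trans hD.
exact: contract_mx.
Qed.
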